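(* Let $m,n,p,q\in\mathbb{R}$ with $m<0$, and let $P(t)=t^5+mt^3+nt^2+pt+q$. Set $u=\frac{2\sqrt{-m}}{\sqrt5}$, $\alpha=\frac{16n}{u^3}$, $\beta=\frac{16p}{u^4}-5$, $\gamma=\frac{16q}{u^5}$, and $f(\theta)=\alpha\cos^2\theta+\beta\cos\theta+\cos 5\theta+\gamma$. Let $N_{\mathrm{int}}$ be the number of zeros of $f$ in $[0,\pi]$ and $N_{\mathrm{ext}}$ the number of real roots of $P$ outside $[-u,u]$. Then all five roots of $P(t)=0$ are real if and only if $N_{\mathrm{int}}+N_{\mathrm{ext}}=5$. Moreover, if $f(0)\ge 0$, $f(\pi)\le 0$, and $f$ has five zeros in $[0,\pi]$, then all five roots of $P$ lie in $[-u,u]$, and they are $t_k=u\cos\theta_k$, $k=1,\dots,5$, where $0\le\theta_1<\cdots<\theta_5\le\pi$ are the five zeros of $f$.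
   Context: Roots of $P$ are its complex roots; $P$ has real coefficients, so nonreal roots occur in conjugate pairs. Note $f(0)=\alpha+\beta+1+\gamma$ and $f(\pi)=\alpha-\beta-1+\gamma$. *)

(* Defs.v *)
From Stdlib Require Import Reals Lra List.
From Coquelicot Require Import Coquelicot.
Open Scope R_scope.

Definition has_card {T : Type} (S : T -> Prop) (k : nat) : Prop :=
  exists l : list T, NoDup l /\ length l = k /\ (forall x, S x <-> In x l).

Definition Pr (m n p q t : R) : R := t ^ 5 + m * t ^ 3 + n * t ^ 2 + p * t + q.

Definition Pc (m n p q : R) (z : C) : C :=
  (z * z * z * z * z + RtoC m * (z * z * z) + RtoC n * (z * z)
   + RtoC p * z + RtoC q)%C.

Definition uu (m : R) : R := 2 * sqrt (- m) / sqrt 5.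
Definition alpha (m n : R) : R := 16 * n / (uu m) ^ 3.
Definition beta (m p : R) : R := 16 * p / (uu m) ^ 4 - 5.
Definition gamma (m q : R) : R := 16 * q / (uu m) ^ 5.

Definition ff (m n p q θ : R) : R :=
  alpha m n * (cos θ) ^ 2 + beta m p * cos θ + cos (5 * θ) + gamma m q.

Definition Zint (m n p q : R) (θ : R) : Prop :=
  0 <= θ <= PI /\ ff m n p q θ = 0.

Definition Zext (m n p q : R) (t : R) : Prop :=
  Pr m n p q t = 0 /\ (t < - uu m \/ uu m < t).

Definition croots (m n p q : R) (z : C) : Prop := Pc m n p q z = RtoC 0.

Definition all_five_roots_real (m n p q : R) : Prop :=
  has_card (croots m n p q) 5 /\ (forall z, croots m n p q z -> Im z = 0).

(* Main.v *)
Require Import Defs.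
From Stdlib Require Import Reals Lra Lia List Classical ClassicalEpsilon.
From Coquelicot Require Import Coquelicot.
Open Scope R_scope.

Fixpoint mon (l : list C) (z : C) : C :=
  match l with nil => 1%C | a :: l' => (a + z * mon l' z)%C end.

Lemma mon_div : forall l a r, exists l', length l' = length l /\
  forall z, mon (a :: l) z = ((z - r) * mon l' z + mon (a :: l) r)%C.
Proof.
  induction l as [|b l IH]; intros a r.
  - exists nil. split; [reflexivity|]. intros z. simpl. ring.
  - destruct (IH b r) as [l'' [Hl Hz]].
    exists (mon (b :: l) r :: l''). split; [simpl; now rewrite Hl|].
    intros z. change (mon (a :: b :: l) z) with (a + z * mon (b :: l) z)%C.
    rewrite Hz. change (mon (a :: b :: l) r) with (a + r * mon (b :: l) r)%C.
    simpl. ring.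
Qed.

Lemma mon_factor : forall l r, mon l r = 0%C -> exists l',
  S (length l') = length l /\ forall z, mon l z = ((z - r) * mon l' z)%C.
Proof.
  intros [|a l] r H.
  - simpl in H. exfalso. injection H. lra.
  - destruct (mon_div l a r) as [l' [Hl Hz]]. exists l'. split; [simpl; auto|].
    intros z. rewrite Hz, H. ring.
Qed.

Lemma Cmult_integral : forall a b : C, (a * b)%C = 0%C -> a = 0%C \/ b = 0%C.
Proof.
  intros a b H. destruct (classic (a = 0%C)) as [|Ha]; [auto|right].
  replace b with (/ a * (a * b))%C by (field; auto). rewrite H. ring.
Qed.

Lemma roots_bound : forall rs l, NoDup rs -> (forall r, In r rs -> mon l r = 0%C) ->
  (length rs <= length l)%nat /\
  (length rs = length l -> forall z, mon l z = 0%C -> In z rs).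
Proof.
  induction rs as [|r rs IH]; intros l Hnd Hr.
  - split; [simpl; lia|]. intros Hl z Hz. destruct l; [|discriminate].
    simpl in Hz. injection Hz. lra.
  - destruct (mon_factor l r (Hr r (or_introl eq_refl))) as [l' [Hl Hf]].
    inversion Hnd as [|? ? Hnin Hnd']; subst.
    assert (Hr' : forall r', In r' rs -> mon l' r' = 0%C).
    { intros r' Hin. assert (Hm := Hr r' (or_intror Hin)). rewrite Hf in Hm.
      destruct (Cmult_integral _ _ Hm) as [H0|H0]; auto.
      exfalso. apply Hnin. replace r with (r' - (r' - r))%C by ring. rewrite H0.
      replace (r' - 0)%C with r' by ring. auto. }
    destruct (IH l' Hnd' Hr') as [H1 H2]. split; [simpl; lia|].
    intros Hlen z Hz. rewrite Hf in Hz. destruct (Cmult_integral _ _ Hz) as [H0|H0].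
    + left. replace z with (z - r + r)%C by ring. rewrite H0. ring.
    + right. apply H2; auto. simpl in Hlen. lia.
Qed.

Lemma roots_list : forall n l, length l = n -> exists L, forall z, mon l z = 0%C -> In z L.
Proof.
  induction n as [|n IH]; intros l Hl.
  - exists nil. intros z Hz. destruct l; [|discriminate]. simpl in Hz. injection Hz. lra.
  - destruct (classic (exists r, mon l r = 0%C)) as [[r Hr]|Hno].
    + destruct (mon_factor l r Hr) as [l' [Hl' Hf]].
      destruct (IH l') as [L HL]; [lia|]. exists (r :: L). intros z Hz.
      rewrite Hf in Hz. destruct (Cmult_integral _ _ Hz) as [H0|H0].
      * left. replace z with (z - r + r)%C by ring. rewrite H0. ring.
      * right; auto.
    + exists nil. intros z Hz. apply Hno. eauto.
Qed.

Lemma card_of_list {T} (S : T -> Prop) (L : list T) :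
  (forall x y : T, {x = y} + {x <> y}) -> (forall x, S x -> In x L) -> exists k, has_card S k.
Proof.
  intros dec HL.
  set (L' := nodup dec (filter (fun x => if excluded_middle_informative (S x) then true else false) L)).
  exists (length L'). exists L'. split; [apply NoDup_nodup|]. split; [auto|].
  intros x. unfold L'. rewrite nodup_In, filter_In. split.
  - intros Hx. split; auto. destruct (excluded_middle_informative (S x)); tauto.
  - intros [_ Hx]. destruct (excluded_middle_informative (S x)); [auto|discriminate].
Qed.

Lemma card_unique {T} (S : T -> Prop) k k' : has_card S k -> has_card S k' -> k = k'.
Proof.
  intros [l [N1 [L1 H1]]] [l' [N2 [L2 H2]]].
  assert (length l <= length l')%nat by (apply NoDup_incl_length; auto; intros x Hx; apply H2, H1, Hx).
  assert (length l' <= length l)%nat by (apply NoDup_incl_length; auto; intros x Hx; apply H1, H2, Hx).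
  lia.
Qed.

Lemma NoDup_map_in {A B} (f : A -> B) (l : list A) :
  NoDup l -> (forall x y, In x l -> In y l -> f x = f y -> x = y) -> NoDup (map f l).
Proof.
  induction l as [|a l IH]; intros Hnd Hinj; simpl; constructor.
  - inversion Hnd; subst. intros Hin. apply in_map_iff in Hin as [x [Hx Hin]].
    assert (x = a) by (apply Hinj; simpl; auto). subst. contradiction.
  - inversion Hnd; subst. apply IH; auto. intros x y Hx Hy. apply Hinj; simpl; auto.
Qed.

Lemma RtoC_inj : forall x y : R, RtoC x = RtoC y -> x = y.
Proof. intros x y H. injection H. auto. Qed.

Definition coefs (m n p q : R) : list C := RtoC q :: RtoC p :: RtoC n :: RtoC m :: RtoC 0 :: nil.

Lemma Pc_mon m n p q z : Pc m n p q z = mon (coefs m n p q) z.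
Proof. unfold Pc, coefs. simpl. ring. Qed.

Lemma Pc_real m n p q t : Pc m n p q (RtoC t) = RtoC (Pr m n p q t).
Proof.
  unfold Pc, Pr.
  replace (t ^ 5 + m * t ^ 3 + n * t ^ 2 + p * t + q) with
    (t*t*t*t*t + m*(t*t*t) + n*(t*t) + p*t + q) by ring.
  rewrite !RtoC_plus, !RtoC_mult. reflexivity.
Qed.

Lemma croots_real m n p q t : croots m n p q (RtoC t) <-> Pr m n p q t = 0.
Proof.
  unfold croots. rewrite Pc_real. split; intros H.
  - apply RtoC_inj; auto.
  - rewrite H; auto.
Qed.

Lemma uu_pos m : m < 0 -> 0 < uu m.
Proof.
  intros hm. unfold uu. assert (0 < sqrt (- m)) by (apply sqrt_lt_R0; lra).
  assert (0 < sqrt 5) by (apply sqrt_lt_R0; lra).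
  apply Rdiv_lt_0_compat; lra.
Qed.

Lemma uu_sq m : m < 0 -> uu m ^ 2 = - 4 * m / 5.
Proof.
  intros hm. unfold uu.
  assert (0 < sqrt 5) by (apply sqrt_lt_R0; lra).
  assert (H1 := sqrt_sqrt (-m)). assert (H2 := sqrt_sqrt 5).
  field_simplify; [|lra]. rewrite <- !Rsqr_pow2. unfold Rsqr.
  rewrite H1, H2 by lra. field.
Qed.

Lemma cos5 x : cos (5 * x) = 16 * cos x ^ 5 - 20 * cos x ^ 3 + 5 * cos x.
Proof.
  replace (5 * x) with (2 * (2 * x) + x) by ring.
  rewrite cos_plus, sin_2a, cos_2a_cos, sin_2a, cos_2a_cos.
  assert (H := sin2_cos2 x). unfold Rsqr in H.
  assert (E : (2 * (2 * sin x * cos x) * (2 * cos x * cos x - 1)) * sin x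
     = 4 * cos x * (2 * cos x * cos x - 1) * (sin x * sin x)) by ring.
  rewrite E. replace (sin x * sin x) with (1 - cos x * cos x) by lra. ring.
Qed.

Lemma ff_eq m n p q th : m < 0 ->
  ff m n p q th = 16 / uu m ^ 5 * Pr m n p q (uu m * cos th).
Proof.
  intros hm. assert (Hu := uu_pos m hm). assert (Hs := uu_sq m hm).
  unfold ff, alpha, beta, gamma, Pr. rewrite cos5.
  set (u := uu m) in *. clearbody u.
  replace m with (- 5 / 4 * u ^ 2) by lra.
  field. lra.
Qed.

Lemma Zint_iff m n p q th : m < 0 ->
  Zint m n p q th <-> (0 <= th <= PI /\ Pr m n p q (uu m * cos th) = 0).
Proof.
  intros hm. assert (Hu := uu_pos m hm). unfold Zint. rewrite ff_eq by auto.
  split; intros [H1 H2]; split; auto.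
  - assert (0 < 16 / uu m ^ 5) by (apply Rdiv_lt_0_compat; [lra|apply pow_lt; lra]).
    apply Rmult_integral in H2 as [H2|H2]; lra.
  - rewrite H2; ring.
Qed.

Definition Zin (m n p q : R) (t : R) : Prop := Pr m n p q t = 0 /\ - uu m <= t <= uu m.

Lemma Zint_Zin m n p q k : m < 0 -> has_card (Zint m n p q) k -> has_card (Zin m n p q) k.
Proof.
  intros hm [l [Hnd [Hl HS]]]. assert (Hu := uu_pos m hm).
  exists (map (fun th => uu m * cos th) l). split; [|split].
  - apply NoDup_map_in; auto. intros x y Hx Hy Hxy.
    apply HS in Hx; apply HS in Hy. apply Zint_iff in Hx as [Hx _]; auto.
    apply Zint_iff in Hy as [Hy _]; auto.
    assert (Hcc : cos x = cos y) by (apply Rmult_eq_reg_l with (uu m); lra).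
    destruct (Rtotal_order x y) as [Ho|[Ho|Ho]]; auto.
    + assert (Hc := cos_decreasing_1 x y); lra.
    + assert (Hc := cos_decreasing_1 y x); lra.
  - now rewrite length_map.
  - intros t. split.
    + intros [H1 H2]. set (th := acos (t / uu m)).
      assert (Hb : -1 <= t / uu m <= 1).
      { split; [apply Rmult_le_reg_r with (uu m)|apply Rmult_le_reg_r with (uu m)];
        auto; field_simplify; lra. }
      assert (Hc : uu m * cos th = t) by (unfold th; rewrite cos_acos; [field|]; lra).
      apply in_map_iff. exists th. split; [exact Hc|]. apply HS. apply Zint_iff; auto.
      split; [apply acos_bound|]. rewrite Hc; auto.
    + intros Hin. apply in_map_iff in Hin as [th [Ht Hin]]. subst t.
      apply HS, Zint_iff in Hin as [Hth Hr]; auto. split; auto.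
      assert (Hc := COS_bound th). split; nra.
Qed.

Lemma five_real m n p q (LR : list R) :
  NoDup LR -> (forall t, Pr m n p q t = 0 <-> In t LR) ->
  (all_five_roots_real m n p q <-> length LR = 5%nat).
Proof.
  intros Hnd HLR.
  assert (HndC : NoDup (map RtoC LR)).
  { apply NoDup_map_in; auto. intros; apply RtoC_inj; auto. }
  split.
  - intros [[LC [HndLC [HlenLC HLC]]] Him].
    assert (length (map RtoC LR) <= length LC)%nat.
    { apply NoDup_incl_length; auto. intros z Hz. apply in_map_iff in Hz as [t [<- Ht]].
      apply HLC, croots_real, HLR; auto. }
    assert (length LC <= length (map RtoC LR))%nat.
    { apply NoDup_incl_length; auto. intros z Hz. apply HLC in Hz.
      assert (Ez : z = RtoC (Re z)).
      { specialize (Him z Hz). destruct z as [a b]. unfold RtoC. simpl in *. congruence. }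
      rewrite Ez in Hz |- *. apply in_map, HLR, croots_real; auto. }
    rewrite length_map in *. lia.
  - intros Hlen.
    assert (Hr : forall r, In r (map RtoC LR) -> mon (coefs m n p q) r = 0%C).
    { intros z Hz. apply in_map_iff in Hz as [t [<- Ht]]. rewrite <- Pc_mon.
      apply croots_real, HLR; auto. }
    destruct (roots_bound _ _ HndC Hr) as [_ Hall].
    assert (HL : forall z, croots m n p q z <-> In z (map RtoC LR)).
    { intros z; split; intros Hz.
      - apply Hall; [rewrite length_map; auto|]. rewrite <- Pc_mon; auto.
      - unfold croots. rewrite Pc_mon. apply Hr; auto. }
    split.
    + exists (map RtoC LR). split; auto. split; [rewrite length_map; auto|auto].
    + intros z Hz. apply HL, in_map_iff in Hz as [t [<- _]]. reflexivity.
Qed.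

Theorem theorem1 (m n p q : R) (hm : m < 0) :
  (* N_int and N_ext are well-defined (finite) *)
  (exists Nint Next : nat, has_card (Zint m n p q) Nint /\ has_card (Zext m n p q) Next)
  /\
  (* all five roots real iff N_int + N_ext = 5 *)
  (forall Nint Next : nat,
     has_card (Zint m n p q) Nint -> has_card (Zext m n p q) Next ->
     (all_five_roots_real m n p q <-> (Nint + Next = 5)%nat))
  /\
  (* the case f(0) >= 0, f(pi) <= 0, five zeros of f in [0, pi] *)
  (ff m n p q 0 >= 0 -> ff m n p q PI <= 0 -> has_card (Zint m n p q) 5 ->
     (forall z : C, croots m n p q z -> Im z = 0 /\ - uu m <= Re z <= uu m)
     /\
     (forall θ1 θ2 θ3 θ4 θ5 : R,
        0 <= θ1 -> θ1 < θ2 -> θ2 < θ3 -> θ3 < θ4 -> θ4 < θ5 -> θ5 <= PI ->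
        (forall θ, Zint m n p q θ <-> In θ (θ1 :: θ2 :: θ3 :: θ4 :: θ5 :: nil)) ->
        forall z : C, croots m n p q z <->
          In z (map (fun θ => RtoC (uu m * cos θ))
                    (θ1 :: θ2 :: θ3 :: θ4 :: θ5 :: nil)))).
Proof.
  assert (Hu := uu_pos m hm).
  split; [|split].
  - destruct (roots_list _ (coefs m n p q) eq_refl) as [L HL].
    assert (HR : forall t, Pr m n p q t = 0 -> In t (map Re L)).
    { intros t Ht. replace t with (Re (RtoC t)) by reflexivity. apply in_map, HL.
      rewrite <- Pc_mon. apply croots_real; auto. }
    destruct (card_of_list (Zint m n p q) (map (fun t => acos (t / uu m)) (map Re L)) Req_EM_T)
      as [k1 Hk1].
    { intros th Hth. apply Zint_iff in Hth as [Hb Hr]; auto.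
      replace th with (acos (uu m * cos th / uu m)).
      - apply in_map_iff. exists (uu m * cos th). split; [reflexivity|]. apply HR; auto.
      - replace (uu m * cos th / uu m) with (cos th) by (field; lra). apply acos_cos; auto. }
    destruct (card_of_list (Zext m n p q) (map Re L) Req_EM_T) as [k2 Hk2].
    { intros t [Ht _]. auto. }
    eauto.
  - intros Nint Next Hi He.
    apply Zint_Zin in Hi as [li [Hndi [Hli HSi]]]; auto.
    destruct He as [le [Hnde [Hle HSe]]].
    rewrite (five_real m n p q (li ++ le)).
    + rewrite length_app. lia.
    + apply NoDup_app; auto. intros t Hi He. apply HSi in Hi. apply HSe in He.
      destruct Hi as [_ Hi]; destruct He as [_ He]; lra.
    + intros t. rewrite in_app_iff, <- HSi, <- HSe. unfold Zin, Zext. split.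
      * intros H. destruct (Rle_lt_dec (- uu m) t); destruct (Rle_lt_dec t (uu m)); intuition.
      * intros [[H _]|[H _]]; auto.
  - intros _ _ H5. split.
    + apply Zint_Zin in H5 as [li [Hndi [Hli HSi]]]; auto.
      assert (HndC : NoDup (map RtoC li)).
      { apply NoDup_map_in; auto. intros; apply RtoC_inj; auto. }
      assert (Hr : forall r, In r (map RtoC li) -> mon (coefs m n p q) r = 0%C).
      { intros z Hz. apply in_map_iff in Hz as [t [<- Ht]]. rewrite <- Pc_mon.
        apply croots_real, HSi; auto. }
      destruct (roots_bound _ _ HndC Hr) as [_ Hall].
      intros z Hz. assert (Hin : In z (map RtoC li)).
      { apply Hall; [rewrite length_map; auto|]. rewrite <- Pc_mon; auto. }
      apply in_map_iff in Hin as [t [<- Ht]]. apply HSi in Ht as [_ Ht].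
      simpl. split; auto.
    + intros t1 t2 t3 t4 t5 h1 h2 h3 h4 h5 h6 HS.
      set (ths := t1 :: t2 :: t3 :: t4 :: t5 :: nil).
      assert (Hb : forall x, In x ths -> 0 <= x <= PI).
      { intros x Hx. simpl in Hx. intuition (subst; lra). }
      assert (Hnd : NoDup ths).
      { unfold ths. repeat constructor; simpl; intuition lra. }
      assert (HndC : NoDup (map (fun th => RtoC (uu m * cos th)) ths)).
      { apply NoDup_map_in; auto. intros x y Hx Hy Hxy.
        apply RtoC_inj in Hxy. apply Hb in Hx; apply Hb in Hy.
        assert (Hcc : cos x = cos y) by (apply Rmult_eq_reg_l with (uu m); lra).
        destruct (Rtotal_order x y) as [Ho|[Ho|Ho]]; auto.
        + assert (Hc := cos_decreasing_1 x y); lra.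
        + assert (Hc := cos_decreasing_1 y x); lra. }
      assert (Hr : forall r, In r (map (fun th => RtoC (uu m * cos th)) ths) ->
                   mon (coefs m n p q) r = 0%C).
      { intros z Hz. apply in_map_iff in Hz as [th [<- Ht]]. rewrite <- Pc_mon.
        apply croots_real. apply HS in Ht. apply Zint_iff in Ht as [_ Ht]; auto. }
      destruct (roots_bound _ _ HndC Hr) as [_ Hall].
      intros z. split; intros Hz.
      * apply Hall; [reflexivity|]. rewrite <- Pc_mon; auto.
      * unfold croots. rewrite Pc_mon. apply Hr; auto.
Qed.
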